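(* No duality of a thick building of type $\mathsf{F}_4$ is domestic.
   Context: A duality of an $\mathsf{F}_4$ building is an automorphism inducing the nontrivial automorphism of the $\mathsf{F}_4$ Coxeter graph. An automorphism is domestic if it maps no chamber to an opposite chamber (a chamber at maximal gallery distance). *)

(* Defs.v *)
(* Buildings of type F4 as W-metric buildings
   (Abramenko--Brown, Def. 5.1), with W the Weyl group of F4 realized
   concretely as the group of 4x4 rational matrices generated by the
   simple reflections of the F4 root system. *)
From HB Require Import structures.
From mathcomp Require Import all_boot all_order all_algebra.
Set Implicit Arguments. Unset Strict Implicit. Unset Printing Implicit Defensive.
Import Order.TTheory GRing.Theory Num.Theory.
Local Open Scope ring_scope.

(* Simple roots of F4, Dynkin diagram  1 - 2 => 3 - 4 :
   a1 = e2-e3, a2 = e3-e4 (long), a3 = e4, a4 = (e1-e2-e3-e4)/2 (short). *)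
Definition F4root_list (i : 'I_4) : seq rat :=
  match val i with
  | 0 => [:: 0; 1; -1; 0]
  | 1 => [:: 0; 0; 1; -1]
  | 2 => [:: 0; 0; 0; 1]
  | _ => [:: 1/2; -1/2; -1/2; -1/2]
  end.

Definition F4root (i : 'I_4) : 'cV[rat]_4 := \col_(j < 4) (F4root_list i)`_j.

Definition refl (a : 'cV[rat]_4) : 'M[rat]_4 :=
  1%:M - (2 / (a^T *m a) 0 0) *: (a *m a^T).

Definition sF4 (i : 'I_4) : 'M[rat]_4 := refl (F4root i).

Definition wprod (u : seq 'I_4) : 'M[rat]_4 :=
  foldr (fun i m => sF4 i *m m) 1%:M u.

Definition inW (w : 'M[rat]_4) : Prop := exists u, wprod u = w.

Definition wlen (w : 'M[rat]_4) (n : nat) : Prop :=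
  (exists u, size u = n /\ wprod u = w) /\
  (forall u, wprod u = w -> (n <= size u)%N).

Definition is_F4_building (Ch : Type) (delta : Ch -> Ch -> 'M[rat]_4) : Prop :=
  [/\ (forall C D, inW (delta C D)),
      (forall C D, delta C D = 1%:M <-> C = D),
      (forall C D C' i, delta C' C = sF4 i ->
          (delta C' D = sF4 i *m delta C D \/ delta C' D = delta C D) /\
          ((forall n, wlen (delta C D) n -> wlen (sF4 i *m delta C D) n.+1) ->
             delta C' D = sF4 i *m delta C D)) &
      (forall C D i, exists C', delta C' C = sF4 i /\
                                delta C' D = sF4 i *m delta C D)].

(* thick: every panel contains at least three chambers *)
Definition thick (Ch : Type) (delta : Ch -> Ch -> 'M[rat]_4) : Prop :=
  forall C i, exists C1 C2, C1 <> C2 /\ delta C C1 = sF4 i /\ delta C C2 = sF4 i.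

(* the nontrivial automorphism of the F4 Coxeter graph: 1<->4, 2<->3 *)
Definition tauF4 (i : 'I_4) : 'I_4 := rev_ord i.

Definition is_duality (Ch : Type) (delta : Ch -> Ch -> 'M[rat]_4) (sigma : Ch -> Ch) : Prop :=
  bijective sigma /\
  forall C D u, delta C D = wprod u ->
    delta (sigma C) (sigma D) = wprod (map tauF4 u).

Definition opposite (Ch : Type) (delta : Ch -> Ch -> 'M[rat]_4) (C D : Ch) : Prop :=
  exists m, wlen (delta C D) m /\
    forall u n, wlen (wprod u) n -> (n <= m)%N.

Definition domestic (Ch : Type) (delta : Ch -> Ch -> 'M[rat]_4) (sigma : Ch -> Ch) : Prop :=
  forall C, ~ opposite delta C (sigma C).

(* Main.v *)
From Stdlib Require Import ZArith Classical Lia.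
Require Import Defs.
From mathcomp Require Import all_boot all_order all_algebra.
From mathcomp Require Import ssrZ zify.
Set Implicit Arguments. Unset Strict Implicit. Unset Printing Implicit Defensive.
Import GRing.Theory.

(* ---------- computational model of W(F4) in the simple-root basis ---------- *)
Definition KZ := seq Z.
Definition entZ (a : KZ) (r c : nat) : Z := nth Z0 a (r * 4 + c).
Definition lmulZ (a b : KZ) : KZ := mkseq (fun n => let r := n %/ 4 in let c := n %% 4 in
   Z.add (Z.mul (entZ a r 0) (entZ b 0 c)) (Z.add (Z.mul (entZ a r 1) (entZ b 1 c))
    (Z.add (Z.mul (entZ a r 2) (entZ b 2 c)) (Z.add (Z.mul (entZ a r 3) (entZ b 3 c)) Z0)))) 16.
Local Open Scope Z_scope.
Definition skZ (i : nat) : KZ :=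
  match i with
  | O => [:: -1;1;0;0; 0;1;0;0; 0;0;1;0; 0;0;0;1]
  | S O => [:: 1;0;0;0; 1;-1;1;0; 0;0;1;0; 0;0;0;1]
  | S (S O) => [:: 1;0;0;0; 0;1;0;0; 0;2;-1;1; 0;0;0;1]
  | _ => [:: 1;0;0;0; 0;1;0;0; 0;0;1;0; 0;0;1;-1]
  end.
Definition idZ : KZ := [:: 1;0;0;0; 0;1;0;0; 0;0;1;0; 0;0;0;1].
Definition hsh (e : KZ) : nat := Z.to_nat (Z.modulo (foldl (fun acc x => acc * 7 + x) 0 e) 211).
Local Close Scope Z_scope.
Fixpoint eqzl (a b : KZ) : bool :=
  match a, b with
  | x :: a', y :: b' => Z.eqb x y && eqzl a' b'
  | [::], [::] => true
  | _, _ => false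
  end.
Definition kprodn (u : seq nat) : KZ := foldr (fun i m => lmulZ (skZ i) m) idZ u.

Fixpoint memt (e : KZ) (t : seq (KZ * seq nat)) : bool :=
  match t with [::] => false | p :: t' => eqzl p.1 e || memt e t' end.
Fixpoint look (e : KZ) (t : seq (KZ * seq nat)) : seq nat :=
  match t with [::] => [::] | p :: t' => if eqzl p.1 e then p.2 else look e t' end.

Fixpoint bfs (n : nat) (seen front : seq (KZ * seq nat)) : seq (KZ * seq nat) :=
  match n with
  | 0 => seen
  | n.+1 =>
    let step := foldl (fun acc p =>
        foldl (fun acc i => let e := lmulZ (skZ i) p.1 in
           if memt e seen || memt e acc then acc else (e, i :: p.2) :: acc)
          acc [:: 0; 1; 2; 3]) [::] front in
    bfs n (step ++ seen) step
  end.
Definition TT : seq (seq (KZ * seq nat)) := Eval vm_compute in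
  let t := bfs 25 [:: (idZ, [::])] [:: (idZ, [::])] in
  [seq [seq p <- t | hsh p.1 == k] | k <- iota 0 211].
Definition buck (e : KZ) := nth [::] TT (hsh e).
Definition lenk (e : KZ) : nat := size (look e (buck e)).
Definition memT (e : KZ) : bool := memt e (buck e).

Definition check_entry (p : KZ * seq nat) : bool :=
  let e := p.1 in let ln := size p.2 in
  [&& eqzl (kprodn p.2) e, all (fun i => i < 4) p.2,
      all (fun i =>
        let le := lenk (lmulZ (skZ i) e) in
        let lr := lenk (lmulZ e (skZ (3 - i))) in
        [&& memT (lmulZ (skZ i) e),
            (le == ln.+1) || (le.+1 == ln),
            (lr == ln.+1) || (lr.+1 == ln) &
            (le == ln.+1) ==> (lr == ln.+1) ==>
              (lenk (lmulZ (skZ i) (lmulZ e (skZ (3 - i)))) == ln.+2)]) [:: 0; 1; 2; 3],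
      (all (fun i => lenk (lmulZ (skZ i) e) < ln) [:: 0; 1; 2; 3]) ==> (ln == 24) &
      ln <= 24].
Definition check_all : bool :=
  [&& all (all check_entry) TT, memT idZ, lenk idZ == 0 &
      all (fun i => eqzl (lmulZ (skZ i) (skZ i)) idZ && ~~ eqzl (skZ i) idZ) [:: 0; 1; 2; 3]].
Lemma check_allP : check_all = true.
Proof. vm_compute. reflexivity. Qed.

Local Open Scope ring_scope.

Definition matQ (l : seq rat) : 'M[rat]_4 := \matrix_(r < 4, c < 4) nth 0 l (r * 4 + c)%N.
Definition Bm : 'M[rat]_4 := matQ [:: 0;0;0;1/2; 1;0;0;-1/2; -1;1;0;-1/2; 0;-1;1;-1/2].
Definition Bim : 'M[rat]_4 := matQ [:: 1;1;0;0; 2;1;1;0; 3;1;1;1; 2;0;0;0].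
Definition ratZ (z : Z) : rat := (int_of_Z z)%:~R.
Definition MZ (a : KZ) : 'M[rat]_4 := \matrix_(r < 4, c < 4) ratZ (entZ a r c).
Definition mat (a : KZ) : 'M[rat]_4 := Bm *m MZ a *m Bim.

Ltac ent_tac r c :=
  case: r => [[|[|[|[|r]]]] Hr] //; case: c => [[|[|[|[|c]]]] Hc] //;
  apply/eqP; vm_compute; reflexivity.

Lemma BBi : Bm *m Bim = 1%:M.
Proof.
apply/matrixP => r c; rewrite !mxE !big_ord_recl big_ord0 !mxE /=.
ent_tac r c.
Qed.
Lemma BiB : Bim *m Bm = 1%:M.
Proof.
apply/matrixP => r c; rewrite !mxE !big_ord_recl big_ord0 !mxE /=.
ent_tac r c.
Qed.

Lemma ratZD x y : ratZ (Z.add x y) = ratZ x + ratZ y.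
Proof. rewrite /ratZ -intrD; congr intr; exact: (rmorphD int_of_Z x y). Qed.
Lemma ratZM x y : ratZ (Z.mul x y) = ratZ x * ratZ y.
Proof. rewrite /ratZ -intrM; congr intr; exact: (rmorphM int_of_Z x y). Qed.
Lemma ratZ0 : ratZ Z0 = 0.
Proof. by []. Qed.

Lemma MZ_mul a b : MZ a *m MZ b = MZ (lmulZ a b).
Proof.
apply/matrixP => r c; rewrite !mxE !big_ord_recl big_ord0 !mxE /=.
rewrite /entZ /lmulZ nth_mkseq; last by case: r c => [r Hr] [c Hc] /=; lia.
have -> : ((r * 4 + c) %/ 4 = r)%N.
  by case: r c => [r Hr] [c Hc] /=; rewrite divnDl ?dvdn_mull // mulnK // divn_small // addn0.
have -> : ((r * 4 + c) %% 4 = c)%N.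
  by case: r c => [r Hr] [c Hc] /=; rewrite modnMDl modn_small.
rewrite !ratZD !ratZM ratZ0 /=.
by rewrite !addr0.
Qed.

Lemma mat_mul a b : mat a *m mat b = mat (lmulZ a b).
Proof.
by rewrite /mat !mulmxA -(mulmxA _ Bim) BiB mulmx1 -(mulmxA _ (MZ a)) MZ_mul.
Qed.

Lemma sF4B (i : 'I_4) : sF4 i *m Bm = Bm *m MZ (skZ i).
Proof.
apply/matrixP => r c.
case: i => [[|[|[|[|i]]]] Hi] //;
rewrite /sF4 /refl /F4root !mxE !big_ord_recl !big_ord0 !mxE /=;
rewrite !big_ord_recl !big_ord0 !mxE /=; ent_tac r c.
Qed.

Lemma sF4_mat (i : 'I_4) : sF4 i = mat (skZ i).
Proof. by rewrite /mat -sF4B -mulmxA BBi mulmx1. Qed.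

Lemma MZ_id : MZ idZ = 1%:M.
Proof. apply/matrixP => r c; rewrite !mxE; ent_tac r c. Qed.

Lemma mat_id : mat idZ = 1%:M.
Proof. by rewrite /mat MZ_id mulmx1 BBi. Qed.

Definition keyZ (w : 'M[rat]_4) : KZ :=
  mkseq (fun n => Z_of_int (numq ((Bim *m w *m Bm) (inord (n %/ 4)) (inord (n %% 4))))) 16.

Lemma keyZ_mat a : size a = 16%N -> keyZ (mat a) = a.
Proof.
move=> Ha; rewrite /keyZ.
have -> : Bim *m mat a *m Bm = MZ a.
  by rewrite /mat !mulmxA BiB mul1mx -mulmxA BiB mulmx1.
apply: (@eq_from_nth _ Z0); first by rewrite size_mkseq Ha.
move=> n; rewrite size_mkseq => Hn.
have H1 : (n %/ 4 < 4)%N by rewrite ltn_divLR.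
have H2 : (n %% 4 < 4)%N by rewrite ltn_mod.
rewrite nth_mkseq // mxE !inordK //.
by rewrite /ratZ numq_int int_of_ZK /entZ -divn_eq.
Qed.

Lemma size_lmulZ a b : size (lmulZ a b) = 16%N.
Proof. by rewrite size_mkseq. Qed.
Lemma size_kprodn u : size (kprodn u) = 16%N.
Proof. by case: u => [|i u] //=; rewrite size_lmulZ. Qed.

Lemma mat_inj a b : size a = 16%N -> size b = 16%N -> mat a = mat b -> a = b.
Proof. by move=> Ha Hb E; rewrite -(keyZ_mat Ha) -(keyZ_mat Hb) E. Qed.

Definition kprod (u : seq 'I_4) : KZ := kprodn (map val u).

Lemma wprod_mat u : wprod u = mat (kprod u).
Proof.
elim: u => [|i u IH] /=; first by rewrite /kprod /= mat_id.
by rewrite IH sF4_mat mat_mul.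
Qed.

Local Close Scope ring_scope.
Arguments buck : simpl never.
Arguments lenk : simpl never.
Arguments memT : simpl never.
Arguments kprodn : simpl never.
Arguments lmulZ : simpl never.
Arguments check_entry : simpl never.


Lemma eqzlP a b : reflect (a = b) (eqzl a b).
Proof.
elim: a b => [|x a IH] [|y b] /=; try by constructor.
case: (Z.eqb_spec x y) => [->|H] /=; last by constructor; case.
by apply: (iffP (IH b)) => [->|[]].
Qed.

Lemma look_spec e t : memt e t -> exists2 p, p \in t & p.1 = e /\ look e t = p.2.
Proof.
elim: t => [|p t IH] //=.
case: (eqzlP p.1 e) => [E _|_ /IH [q Hq Hq2]].
  by exists p; rewrite ?mem_head.
by exists q => //; rewrite in_cons Hq orbT.
Qed.

Lemma buck_ok e p : p \in buck e -> check_entry p.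
Proof.
have := check_allP; rewrite /check_all => /and4P [/allP H _ _ _].
rewrite /buck; case: (ltnP (hsh e) (size TT)) => Hs.
  by move/(allP (H _ (mem_nth [::] Hs))).
by rewrite nth_default.
Qed.

Lemma memT_check e : memT e -> check_entry (e, look e (buck e)).
Proof.
rewrite /memT => /look_spec [[e' w] Hp [/= E1 E2]].
have H := buck_ok Hp.
by rewrite E2 -E1.
Qed.

Lemma all4 (P : pred nat) (i : 'I_4) : all P [:: 0; 1; 2; 3]%N -> P i.
Proof. by move=> /allP H; apply: H; case: i => [[|[|[|[|]]]] ?]. Qed.

Definition lw (u : seq 'I_4) : nat := lenk (kprod u).

Lemma E_all e : memT e ->
  [/\ kprodn (look e (buck e)) = e, all (fun i => i < 4)%N (look e (buck e)),
      all (fun i =>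
        let le := lenk (lmulZ (skZ i) e) in
        let lr := lenk (lmulZ e (skZ (3 - i))) in
        [&& memT (lmulZ (skZ i) e),
            (le == (lenk e).+1) || (le.+1 == lenk e),
            (lr == (lenk e).+1) || (lr.+1 == lenk e) &
            (le == (lenk e).+1) ==> (lr == (lenk e).+1) ==>
              (lenk (lmulZ (skZ i) (lmulZ e (skZ (3 - i)))) == (lenk e).+2)]) [:: 0; 1; 2; 3]%N,
      (all (fun i => lenk (lmulZ (skZ i) e) < lenk e) [:: 0; 1; 2; 3]%N) ==> (lenk e == 24%N) &
      (lenk e <= 24)%N].
Proof.
move=> H; have := memT_check H.
rewrite /check_entry -/(lenk e).
by case/and5P => /eqzlP.
Qed.

Lemma E_word e : memT e -> kprodn (look e (buck e)) = e /\ all (fun i => i < 4)%N (look e (buck e)).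
Proof. by case/E_all. Qed.

Lemma E_left e (i : 'I_4) : memT e ->
  memT (lmulZ (skZ i) e) /\ (lenk (lmulZ (skZ i) e) = (lenk e).+1 \/ (lenk (lmulZ (skZ i) e)).+1 = lenk e).
Proof.
case/E_all => _ _ H _ _; have := all4 i H => /and4P [H1 H2 _ _].
split; first exact: H1.
by case/orP: H2 => /eqP E; [left|right]; exact: E.
Qed.

Lemma E_right e (i : 'I_4) : memT e ->
  (lenk (lmulZ e (skZ (3 - i))) = (lenk e).+1 \/ (lenk (lmulZ e (skZ (3 - i)))).+1 = lenk e).
Proof.
case/E_all => _ _ H _ _; have := all4 i H => /and4P [_ _ H2 _].
by case/orP: H2 => /eqP E; [left|right]; exact: E.
Qed.

Lemma E_two e (i : 'I_4) : memT e ->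
  lenk (lmulZ (skZ i) e) = (lenk e).+1 -> lenk (lmulZ e (skZ (3 - i))) = (lenk e).+1 ->
  lenk (lmulZ (skZ i) (lmulZ e (skZ (3 - i)))) = (lenk e).+2.
Proof.
case/E_all => _ _ H _ _; have := all4 i H => /and4P [_ _ _ H2] E1 E2.
move: H2; rewrite E1 E2 !eqxx /= => /eqP E; exact: E.
Qed.

Lemma E_top e : memT e -> (forall i : 'I_4, (lenk (lmulZ (skZ i) e) < lenk e)%N) -> lenk e = 24%N.
Proof.
case/E_all => _ _ _ H _ Hi.
have Ha : all (fun i => lenk (lmulZ (skZ i) e) < lenk e) [:: 0; 1; 2; 3].
  apply/allP => n Hn.
  have Hn4 : n < 4 by move: Hn; rewrite !inE => /or4P [] /eqP ->.
  exact: (Hi (Ordinal Hn4)).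
move: H; rewrite Ha implyTb => /eqP E; exact: E.
Qed.

Lemma E_max e : memT e -> (lenk e <= 24)%N.
Proof. case/E_all => _ _ _ _ H; exact: H. Qed.

Lemma kclosure u : memT (kprod u) /\ (lw u <= size u)%N.
Proof.
elim: u => [|i u [IH1 IH2]].
  have := check_allP; rewrite /check_all => /and4P [_ H1 /eqP H2 _].
  by rewrite /lw /kprod /= H2.
have [H1 H2] := E_left i IH1.
have K : kprod (i :: u) = lmulZ (skZ i) (kprod u) by [].
split; first exact: H1.
rewrite /lw K; move: IH2; rewrite /lw /=.
case: H2 => E; lia.
Qed.

Arguments lw : simpl never.
Local Open Scope ring_scope.


Lemma kprod_cons i u : kprod (i :: u) = lmulZ (skZ i) (kprod u).
Proof. reflexivity. Qed.

Lemma lw_eq u v : wprod u = wprod v -> lw u = lw v.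
Proof.
rewrite !wprod_mat => /mat_inj E; rewrite /lw E //; exact: size_kprodn.
Qed.

Definition wordof (u : seq 'I_4) : seq 'I_4 := map (fun n : nat => (inord n : 'I_4)) (look (kprod u) (buck (kprod u))).

Lemma wordofP u : wprod (wordof u) = wprod u /\ size (wordof u) = lw u.
Proof.
have [H1 _] := kclosure u.
have [E A] := E_word H1.
split; last by rewrite size_map.
rewrite !wprod_mat; congr mat.
rewrite /kprod /wordof -map_comp -[X in _ = X]E; congr kprodn.
rewrite -[RHS]map_id; apply/eq_in_map => n Hn /=.
by rewrite inordK //; move/allP: A => /(_ n Hn).
Qed.

Lemma lw_le u : (lw u <= size u)%N.
Proof. by have [_ H] := kclosure u. Qed.

Lemma wlen_lw u : wlen (wprod u) (lw u).
Proof.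
split; first by exists (wordof u); have [E1 E2] := wordofP u; split.
move=> v /lw_eq E; rewrite -E; exact: lw_le.
Qed.

Lemma wlen_uniq w n m : wlen w n -> wlen w m -> n = m.
Proof.
move=> [[u [Su Eu]] Hn] [[v [Sv Ev]] Hm].
apply/eqP; rewrite eqn_leq; apply/andP; split.
  by rewrite -Sv; apply: Hn.
by rewrite -Su; apply: Hm.
Qed.

Lemma wlen_lw_eq u n : wlen (wprod u) n -> n = lw u.
Proof. move=> H; exact: wlen_uniq H (wlen_lw u). Qed.

Lemma wprod_cat u v : wprod (u ++ v) = wprod u *m wprod v.
Proof. by elim: u => [|i u IH] /=; rewrite ?mul1mx // IH mulmxA. Qed.

Lemma wprod1 i : wprod [:: i] = sF4 i.
Proof. by rewrite /= mulmx1. Qed.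

Lemma sF4_size (i : 'I_4) : size (skZ i) = 16%N.
Proof. by case: i => [[|[|[|[|i]]]] Hi]. Qed.

Lemma sF4K (i : 'I_4) : sF4 i *m sF4 i = 1%:M.
Proof.
have := check_allP; rewrite /check_all => /and4P [_ _ _ H].
have := all4 i H => /andP [/eqzlP E _].
by rewrite sF4_mat mat_mul E mat_id.
Qed.

Lemma sF4_neq1 (i : 'I_4) : sF4 i <> 1%:M.
Proof.
have := check_allP; rewrite /check_all => /and4P [_ _ _ H].
have := all4 i H => /andP [_ /eqzlP E].
move=> E1; have E2 : mat (skZ i) = mat idZ by rewrite -sF4_mat mat_id.
have := mat_inj (sF4_size i) (erefl : size idZ = 16%N) E2 => E'.
exact: E E'.
Qed.

Lemma sF4K' (i : 'I_4) (M : 'M[rat]_4) : sF4 i *m (sF4 i *m M) = M.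
Proof. by rewrite mulmxA sF4K mul1mx. Qed.

Lemma wprod_revK u : wprod (rev u) *m wprod u = 1%:M.
Proof.
elim: u => [|i u IH]; first by rewrite /= mul1mx.
rewrite rev_cons -cats1 wprod_cat /= mulmx1 -mulmxA sF4K' //.
Qed.

Lemma wprod_revK' u : wprod u *m wprod (rev u) = 1%:M.
Proof. by have := wprod_revK (rev u); rewrite revK. Qed.

Lemma rev_eq u v : wprod u = wprod v -> wprod (rev u) = wprod (rev v).
Proof.
move=> E.
rewrite -[wprod (rev u)]mulmx1 -(wprod_revK' v) mulmxA -E wprod_revK mul1mx //.
Qed.

Lemma lw_rev u : lw (rev u) = lw u.
Proof.
have H : forall u, (lw (rev u) <= lw u)%N.
  move=> x; have [E S] := wordofP x.
  rewrite (lw_eq (rev_eq (esym E))) -S -(size_rev (wordof x)); exact: lw_le.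
apply/eqP; rewrite eqn_leq H /=; have := H (rev u); rewrite revK //.
Qed.

Lemma lw_cat_le1 a b : (lw (a ++ b) <= lw a + size b)%N.
Proof.
have [E S] := wordofP a.
have -> : lw (a ++ b) = lw (wordof a ++ b) by apply: lw_eq; rewrite !wprod_cat E.
rewrite -S -size_cat; exact: lw_le.
Qed.

Lemma lw_cat_le2 a b : (lw (a ++ b) <= size a + lw b)%N.
Proof.
have [E S] := wordofP b.
have -> : lw (a ++ b) = lw (a ++ wordof b) by apply: lw_eq; rewrite !wprod_cat E.
rewrite -S -size_cat; exact: lw_le.
Qed.

Lemma prefix_red a b : lw (a ++ b) = (size a + size b)%N -> lw a = size a.
Proof.
move=> H; have := lw_cat_le1 a b; have := lw_le a; rewrite H; lia.
Qed.

Lemma LUP (i : 'I_4) u : lw (i :: u) = (lw u).+1 ->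
  forall n, wlen (wprod u) n -> wlen (sF4 i *m wprod u) n.+1.
Proof.
move=> H n /wlen_lw_eq ->; rewrite -H; exact: (wlen_lw (i :: u)).
Qed.

Lemma kprod_rcons u (j : 'I_4) : kprod (rcons u j) = lmulZ (kprod u) (skZ j).
Proof.
apply: mat_inj; try exact: size_kprodn; first exact: size_lmulZ.
by rewrite -mat_mul -!wprod_mat -sF4_mat -cats1 wprod_cat wprod1.
Qed.

Lemma tauF4_val (i : 'I_4) : val (tauF4 i) = (3 - i)%N.
Proof. by []. Qed.

Lemma F1a u (i : 'I_4) : lw (i :: u) = (lw u).+1 \/ (lw (i :: u)).+1 = lw u.
Proof.
have [H _] := kclosure u; have [_ H2] := @E_left _ i H.
rewrite /lw kprod_cons; exact: H2.
Qed.

Lemma F1b u (i : 'I_4) : lw (rcons u (tauF4 i)) = (lw u).+1 \/ (lw (rcons u (tauF4 i))).+1 = lw u.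
Proof.
have [H _] := kclosure u; have H2 := @E_right _ i H.
rewrite /lw kprod_rcons tauF4_val; exact: H2.
Qed.

Lemma F2 u (i : 'I_4) : lw (i :: u) = (lw u).+1 -> lw (rcons u (tauF4 i)) = (lw u).+1 ->
  lw (i :: rcons u (tauF4 i)) = (lw u).+2.
Proof.
have [H _] := kclosure u; have H2 := @E_two _ i H.
rewrite /lw !kprod_cons !kprod_rcons tauF4_val; exact: H2.
Qed.

Lemma F3 u : (forall i : 'I_4, (lw (i :: u) < lw u)%N) -> lw u = 24%N.
Proof.
have [H _] := kclosure u => Hi; apply: (E_top H) => i; have := Hi i.
rewrite /lw kprod_cons; exact.
Qed.

Lemma F4 u : (lw u <= 24)%N.
Proof. have [H _] := kclosure u; exact: E_max H. Qed.



Lemma bl_refl Ch (d : Ch -> Ch -> 'M[rat]_4) (Hb : is_F4_building d) C : d C C = 1%:M.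
Proof. case: Hb => _ H1 _ _; exact/H1. Qed.

Lemma bl_word Ch (d : Ch -> Ch -> 'M[rat]_4) (Hb : is_F4_building d) C D :
  exists u, d C D = wprod u.
Proof. case: Hb => H _ _ _; have [u E] := H C D; exists u; exact: esym E. Qed.

Lemma bl_sym1 Ch (d : Ch -> Ch -> 'M[rat]_4) (Hb : is_F4_building d) X C (i : 'I_4) :
  d X C = sF4 i -> d C X = sF4 i.
Proof.
move=> E; have R := bl_refl Hb X.
case: Hb => _ H1 H2 _.
have [[E1|E1] _] := H2 C X X i E.
  by rewrite -(sF4K' i (d C X)) -E1 R mulmx1.
have CX : C = X by apply/H1; rewrite -E1.
by move: E; rewrite CX R => /esym /sF4_neq1.
Qed.

Lemma lWD2 Ch (d : Ch -> Ch -> 'M[rat]_4) (Hb : is_F4_building d) C' C D (i : 'I_4) u :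
  d C' C = sF4 i -> d C D = wprod u -> lw (i :: u) = (lw u).+1 -> d C' D = wprod (i :: u).
Proof.
case: Hb => _ _ H2 _ E1 E2 L.
have [_ H] := H2 C D C' i E1.
rewrite /= -E2; apply: H; rewrite E2; exact: LUP.
Qed.

Lemma gal Ch (d : Ch -> Ch -> 'M[rat]_4) (Hb : is_F4_building d) u :
  forall v C D C0, d C D = wprod u -> d C C0 = wprod v ->
  lw (rev v ++ u) = size (rev v ++ u) -> d D C0 = wprod (rev u ++ v).
Proof.
have Hb' := Hb; case: Hb' => _ H1 _ H3.
elim: u => [|i u IH] v C D C0 E1 E2 R.
  have CD : C = D by apply/H1; rewrite E1.
  by rewrite -CD E2.
have [C1 [F1 F2]] := H3 C D i.
rewrite E1 /= sF4K' in F2.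
have Rv : lw (i :: v) = (lw v).+1.
  have R' : lw (rev (i :: v) ++ u) = (size (rev (i :: v)) + size u)%N.
    by rewrite rev_cons cat_rcons R size_cat size_rcons /= addnS.
  have := prefix_red R'; rewrite lw_rev size_rev /= => R2.
  have := lw_cat_le2 [:: i] v; have := lw_le v; rewrite /= R2; lia.
have G := lWD2 Hb F1 E2 Rv.
have := IH (i :: v) C1 D C0 F2 G.
rewrite rev_cons cat_rcons => H; rewrite rev_cons cat_rcons; exact: H R.
Qed.

Lemma binv Ch (d : Ch -> Ch -> 'M[rat]_4) (Hb : is_F4_building d) C D u :
  d C D = wprod u -> d D C = wprod (rev u).
Proof.
move=> E; have [Ew Sw] := wordofP u.
have E' : d C D = wprod (wordof u) by rewrite Ew.
have E0 : d C C = wprod [::] by rewrite (bl_refl Hb).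
have R : lw (rev [::] ++ wordof u) = size (rev [::] ++ wordof u).
  rewrite /= Sw; exact: lw_eq Ew.
have := gal Hb E' E0 R; rewrite cats0 => ->; exact: rev_eq.
Qed.

Lemma rWD2 Ch (d : Ch -> Ch -> 'M[rat]_4) (Hb : is_F4_building d) X Y Y' (j : 'I_4) u :
  d Y' Y = sF4 j -> d X Y = wprod u ->
  (d X Y' = wprod (rcons u j) \/ d X Y' = wprod u) /\
  (lw (rcons u j) = (lw u).+1 -> d X Y' = wprod (rcons u j)).
Proof.
move=> E1 E2; have E3 := binv Hb E2.
have Hrc : rev (j :: rev u) = rcons u j by rewrite rev_cons revK.
have Hb' := Hb; case: Hb' => _ _ H2 _.
split.
  have [[F|F] _] := H2 Y X Y' j E1.
    left; rewrite E3 in F; have F' : d Y' X = wprod (j :: rev u) by rewrite F.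
    by rewrite (binv Hb F') Hrc.
  right; rewrite E3 in F; by rewrite (binv Hb F) revK.
move=> L.
have L' : lw (j :: rev u) = (lw (rev u)).+1.
  by rewrite -rev_rcons !lw_rev.
by rewrite (binv Hb (lWD2 Hb E1 E3 L')) Hrc.
Qed.

Lemma rWD3 Ch (d : Ch -> Ch -> 'M[rat]_4) (Hb : is_F4_building d) X Y (j : 'I_4) u :
  d X Y = wprod u -> exists E, d E Y = sF4 j /\ d X E = wprod (rcons u j).
Proof.
move=> E2; have E3 := binv Hb E2.
have Hb' := Hb; case: Hb' => _ _ _ H3.
have [E [F1 F2]] := H3 Y X j.
rewrite E3 in F2; have F2' : d E X = wprod (j :: rev u) by rewrite F2.
exists E; split; first exact: F1.
by rewrite (binv Hb F2') rev_cons revK.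
Qed.

Lemma panel Ch (d : Ch -> Ch -> 'M[rat]_4) (Hb : is_F4_building d) A B Y (j : 'I_4) :
  d A Y = sF4 j -> d B Y = sF4 j -> A <> B -> d A B = sF4 j.
Proof.
move=> EA EB N; have EB' := bl_sym1 Hb EB.
have Hb' := Hb; case: Hb' => _ H1 H2 _.
have [[F|F] _] := H2 Y B A j EA.
  by exfalso; apply: N; apply/H1; rewrite F EB' sF4K.
by rewrite F EB'.
Qed.

Lemma dual_adj Ch (d : Ch -> Ch -> 'M[rat]_4) (s : Ch -> Ch) (Hd : is_duality d s) X C (i : 'I_4) :
  d X C = sF4 i -> d (s X) (s C) = sF4 (tauF4 i).
Proof.
case: Hd => _ H E; rewrite -wprod1 in E.
by rewrite (H X C [:: i] E) /= mulmx1.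
Qed.

Lemma step Ch (d : Ch -> Ch -> 'M[rat]_4) (s : Ch -> Ch) (Hb : is_F4_building d)
  (Ht : thick d) (Hd : is_duality d s) C u :
  d C (s C) = wprod u ->
  lw u = 24%N \/ exists C' u', d C' (s C') = wprod u' /\ (lw u < lw u')%N.
Proof.
move=> Eu.
case: (boolP [forall i : 'I_4, (lw (i :: u) < lw u)%N]) => [/forallP H|/forallPn [i Hi]].
  left; exact: F3.
right.
have Li : lw (i :: u) = (lw u).+1.
  case: (F1a u i) => E; first exact: E.
  exfalso; move/negP: Hi; apply; lia.
set j := tauF4 i.
have [C1 [C2 [N12 [A1 A2]]]] := Ht C i.
have B1 := bl_sym1 Hb A1; have B2 := bl_sym1 Hb A2.
have X1 := lWD2 Hb B1 Eu Li; have X2 := lWD2 Hb B2 Eu Li.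
have S1 := dual_adj Hd B1; have S2 := dual_adj Hd B2.
case: (F1b u i) => Rj.
  have L2 := F2 Li Rj.
  have [_ G] := rWD2 Hb S1 X1.
  have L : lw (rcons (i :: u) j) = (lw (i :: u)).+1.
    have -> : rcons (i :: u) j = i :: rcons u j by [].
    rewrite L2 Li; reflexivity.
  exists C1, (i :: rcons u j); split; first exact: G L.
  rewrite L2; lia.
have [E [E1 E2]] := rWD3 Hb j Eu.
have key : forall X, d X C = sF4 i -> d (s X) (s C) = sF4 j ->
    s X = E \/ exists C' u', d C' (s C') = wprod u' /\ (lw u < lw u')%N.
  move=> X BX SX; case: (classic (s X = E)) => [h|h]; [left; exact: h|right].
  have P := panel Hb SX E1 h.
  have [_ G] := rWD2 Hb P E2.
  have W : wprod (rcons (rcons u j) j) = wprod u.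
    by rewrite -!cats1 !wprod_cat wprod1 -mulmxA sF4K mulmx1.
  have L : lw (rcons (rcons u j) j) = (lw (rcons u j)).+1.
    rewrite (lw_eq W) Rj; reflexivity.
  have G' := G L; rewrite W in G'.
  have := lWD2 Hb BX G' Li => H.
  exists X, (i :: u); split; first exact: H.
  rewrite Li; lia.
case: (key C1 B1 S1) => [h1|h]; last exact: h.
case: (key C2 B2 S2) => [h2|h]; last exact: h.
exfalso; apply: N12; case: Hd => [[g K1 K2] _].
by rewrite -(K1 C1) -(K1 C2) h1 h2.
Qed.

Lemma opp_of Ch (d : Ch -> Ch -> 'M[rat]_4) C D u :
  d C D = wprod u -> lw u = 24%N -> opposite d C D.
Proof.
move=> E L; exists 24%N; split.
  rewrite E -L; exact: wlen_lw.
move=> v n /wlen_lw_eq ->; exact: F4.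
Qed.

Lemma main_ind Ch (d : Ch -> Ch -> 'M[rat]_4) (s : Ch -> Ch) (Hb : is_F4_building d)
  (Ht : thick d) (Hd : is_duality d s) k :
  forall C u, d C (s C) = wprod u -> (24 - lw u <= k)%N -> exists C', opposite d C' (s C').
Proof.
elim: k => [|k IH] C u E K.
  case: (step Hb Ht Hd E) => [L|[C' [u' [E' L']]]].
    by exists C; exact: opp_of E L.
  exfalso; have := F4 u'; lia.
case: (step Hb Ht Hd E) => [L|[C' [u' [E' L']]]].
  by exists C; exact: opp_of E L.
apply: (IH C' u' E'); have := F4 u'; lia.
Qed.

Theorem lemma4p1 (Ch : Type) (c0 : Ch) (delta : Ch -> Ch -> 'M[rat]_4)
  (sigma : Ch -> Ch) :
  is_F4_building delta -> thick delta -> is_duality delta sigma ->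
  ~ domestic delta sigma.
Proof.
move=> Hb Ht Hd Hdom.
have [u E] := bl_word Hb c0 (sigma c0).
have [C' HC'] := main_ind Hb Ht Hd E (leq_subr (lw u) 24).
exact: Hdom C' HC'.
Qed.
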